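(* Consider the circuit that starts from $|\mathbf{0}\rangle\otimes|\psi\rangle$ (first register in the basis state of the trivial representation of $G$), applies $\mathcal{F}_G^{-1}$ to the first register (preparing $\frac{1}{\sqrt{|G|}}\sum_{g\in G}|g\rangle$), applies the controlled group action $U_R=\sum_{g\in G}|g\rangle\langle g|\otimes R(g)$, applies $\mathcal{F}_G$ to the first register, and measures the irrep label $\lambda$. If the input state $|\psi\rangle$ is invariant under the $R$-action of the hidden subgroup $H<G$, the outcome distribution is $$\mathrm{P}_{\mathrm{StateHSP}_\psi}[\lambda]=\frac{d_\lambda}{|G|}\sum_{c\in G/H}\sum_{h\in H}\chi_\lambda(ch)\,\langle\psi|R(c)|\psi\rangle,$$ where $\lambda$ ranges over the irreducible representations of $G$ and $G/H$ denotes a set of coset representatives.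
   Context: $G$ is a finite group with a unitary representation $R:G\to\mathrm{U}(d)$, and $|\psi\rangle\in\mathbb{C}^d$ satisfies $R(h)|\psi\rangle=|\psi\rangle$ for all $h\in H$. $\mathbb{C}^G=\mathrm{span}\{|g\rangle\}_{g\in G}$ is the regular-representation register with orthonormal basis. $\{\rho_\lambda\}$ is a complete set of unitary irreducible representations of $G$, $\rho_\lambda:G\to\mathrm{U}(d_\lambda)$, with characters $\chi_\lambda(g)=\mathrm{Tr}\,\rho_\lambda(g)$. The group Fourier transform is $\mathcal{F}_G|g\rangle=\sum_{\lambda,\,i,j\in[d_\lambda]}\sqrt{d_\lambda/|G|}\,\rho_\lambda(g)_{i,j}|\lambda,i,j\rangle$. *)

(* Defs.v *)
From mathcomp Require Import all_boot all_order all_algebra all_fingroup all_solvable all_field all_character.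
Set Implicit Arguments. Unset Strict Implicit. Unset Printing Implicit Defensive.
Import GRing.Theory Num.Theory.
Local Open Scope ring_scope.

Section StateHSP.
Variables (gT : finGroupType) (G : {group gT}).

Definition adjmx m n (A : 'M[algC]_(m, n)) : 'M[algC]_(n, m) := (map_mx (fun x : algC => x^*) A)^T.

Definition unitary_mx n (A : 'M[algC]_n) : Prop := A *m adjmx A = 1%:M.

Definition unitary_rep n (r : mx_representation algC G n) : Prop :=
  forall g, g \in G -> unitary_mx (r g).

Definition braket n (u v : 'cV[algC]_n) : algC := (adjmx u *m v) 0 0.
Definition sqnorm n (v : 'cV[algC]_n) : algC := \sum_k `|v k 0| ^+ 2.

Variables (dim : Iirr G -> nat) (rho : forall l : Iirr G, mx_representation algC G (dim l)).
Variable (D : nat).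

(* States of C^G (x) C^D : amplitude vector g |-> component in C^D (only g in G matter). *)
Definition gstate := gT -> 'cV[algC]_D.
(* States of the Fourier basis {|l,i,j>} (x) C^D. *)
Definition fstate := forall l : Iirr G, 'I_(dim l) -> 'I_(dim l) -> 'cV[algC]_D.

Definition fcoef (l : Iirr G) : algC := sqrtC ((dim l)%:R / #|G|%:R).

Definition QFT (f : gstate) : fstate :=
  fun l i j => \sum_(g in G) (fcoef l * rho l g i j) *: f g.

Definition IQFT (v : fstate) : gstate :=
  fun g => \sum_(l : Iirr G) \sum_(i < dim l) \sum_(j < dim l)
             (fcoef l * (rho l g i j)^*) *: v l i j.

(* |0> (x) |psi>, where |0> is the basis state of the trivial irrep 0 (dimension 1) *)
Definition init_state (psi : 'cV[algC]_D) : fstate :=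
  fun l i j => if (l == 0) && (val i == 0%N) && (val j == 0%N) then psi else 0.

Definition ctrl_act (R : mx_representation algC G D) (f : gstate) : gstate :=
  fun g => R g *m f g.

Definition prob_label (v : fstate) (l : Iirr G) : algC :=
  \sum_(i < dim l) \sum_(j < dim l) sqnorm (v l i j).

Definition StateHSP_prob (R : mx_representation algC G D) (psi : 'cV[algC]_D)
  (l : Iirr G) : algC :=
  prob_label (QFT (ctrl_act R (IQFT (init_state psi)))) l.

End StateHSP.

(* Main.v *)
Require Import Defs.
From mathcomp Require Import all_boot all_order all_algebra all_fingroup all_solvable all_field all_character.
Import GRing.Theory Num.Theory.
From mathcomp Require Import ring.
Local Open Scope ring_scope.

Lemma adjmxM m n p (A : 'M[algC]_(m, n)) (B : 'M[algC]_(n, p)) :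
  adjmx (A *m B) = adjmx B *m adjmx A.
Proof. by rewrite /adjmx map_mxM trmx_mul. Qed.

Lemma unitary_adj (gT : finGroupType) (G : {group gT}) n (r : mx_representation algC G n) g :
  unitary_rep r -> g \in G -> adjmx (r g) = r g^-1%g.
Proof.
move=> U Gg; have := U g Gg; rewrite /unitary_mx => E.
by rewrite -[adjmx _]mul1mx -(repr_mxKV r Gg 1%:M) mul1mx -mulmxA E mulmx1.
Qed.

Lemma braketE n (u v : 'cV[algC]_n) : braket u v = \sum_k (u k 0)^* * v k 0.
Proof. by rewrite /braket mxE; apply: eq_bigr => k _; rewrite /adjmx !mxE. Qed.

Lemma sqnormE n (v : 'cV[algC]_n) : sqnorm v = braket v v.
Proof. by rewrite braketE /sqnorm; apply: eq_bigr => k _; rewrite normCK mulrC. Qed.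

Lemma braket_sum (I : finType) (P : pred I) n (b c : I -> algC) (u v : I -> 'cV[algC]_n) :
  braket (\sum_(i | P i) b i *: u i) (\sum_(j | P j) c j *: v j) =
  \sum_(i | P i) \sum_(j | P j) ((b i)^* * c j) * braket (u i) (v j).
Proof.
rewrite braketE.
under eq_bigr => k _ do rewrite !summxE rmorph_sum mulr_suml.
rewrite exchange_big; apply: eq_bigr => i _.
under eq_bigr => k _ do rewrite mulr_sumr.
rewrite exchange_big; apply: eq_bigr => j _.
rewrite braketE mulr_sumr; apply: eq_bigr => k _.
by rewrite !mxE rmorphM /=; ring.
Qed.

Lemma sqrtC_conjK (x : algC) : 0 <= x -> (sqrtC x)^* * sqrtC x = x.
Proof. by move=> x0; rewrite geC0_conj ?sqrtC_ge0 // -expr2 sqrtCK. Qed.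

Lemma triv_rep (gT : finGroupType) (G : {group gT})
  (dim : Iirr G -> nat) (rho : forall l : Iirr G, mx_representation algC G (dim l)) :
  (forall l, cfRepr (rho l) = 'chi_l) ->
  dim 0 = 1%N /\ forall g, g \in G -> forall i j, rho 0 g i j = 1.
Proof.
move=> Hc.
have d1 : dim 0 = 1%N.
  by apply/eqP; rewrite -(eqr_nat algC) -(cfRepr1 (rho 0)) Hc irr0 cfun1E group1.
split=> // g Gg i j.
have eq0 (k : 'I_(dim 0)) : k = i.
  have gen n (a b : 'I_n) : n = 1%N -> a = b.
    by move=> n1; subst n; apply: val_inj; rewrite /= !ord1.
  exact: gen.
have := f_equal (fun f : 'CF(G) => f g) (Hc 0).
rewrite irr0 cfun1E Gg cfunE Gg /= mulr1n /mxtrace (eq_bigr (fun _ => rho 0 g i j)).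
  rewrite sumr_const card_ord; move: (rho 0 g i j) => x; by rewrite d1.
by move=> k _; rewrite (eq0 k) (eq0 j).
Qed.

Lemma tr_adj (gT : finGroupType) (G : {group gT}) n (r : mx_representation algC G n) g g' :
  unitary_rep r -> g \in G -> g' \in G ->
  \tr (r (g^-1 * g')%g) = \sum_i \sum_j (r g i j)^* * r g' i j.
Proof.
move=> U Gg Gg'; rewrite repr_mxM ?groupV // -unitary_adj // /mxtrace.
rewrite exchange_big; apply: eq_bigr => i _; rewrite mxE; apply: eq_bigr => j _.
by rewrite /adjmx !mxE.
Qed.

Lemma braket_R (gT : finGroupType) (G : {group gT}) n (r : mx_representation algC G n) g g' psi :
  unitary_rep r -> g \in G -> g' \in G ->
  braket (r g *m psi) (r g' *m psi) = braket psi (r (g^-1 * g')%g *m psi).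
Proof.
by move=> U Gg Gg'; rewrite /braket adjmxM unitary_adj // repr_mxM ?groupV // !mulmxA.
Qed.

Lemma sum_transl (gT : finGroupType) (G : {group gT}) (f : gT -> algC) g :
  g \in G -> \sum_(g' in G) f (g^-1 * g')%g = \sum_(x in G) f x.
Proof.
move=> Gg; rewrite (reindex_inj (mulgI g)) /=.
by apply: eq_big => [x|x _]; rewrite ?groupMl // mulKg.
Qed.

Lemma sum_transversal (gT : finGroupType) (G H : {group gT}) (T : {set gT}) (f : gT -> algC) :
  H \subset G -> is_transversal T (lcosets H G) G ->
  \sum_(x in G) f x = \sum_(c in T) \sum_(h in H) f (c * h)%g.
Proof.
move=> sHG tr.
have part : partition (lcosets H G) G by case/and3P: tr.
rewrite (set_partition_big _ part) -(pblock_transversal tr) big_imset /=; last first.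
  exact: pblock_inj tr.
apply: eq_bigr => c Tc.
have Gc : c \in G by apply: (subsetP (transversal_sub tr)).
have cH : (c *: H)%g \in lcosets H G by apply/lcosetsP; exists c.
have tiP : trivIset (lcosets H G) by case/and3P: part.
rewrite (def_pblock tiP cH); last by rewrite lcoset_refl.
by rewrite -lcosetE big_imset //=; apply: in2W; apply: mulgI.
Qed.

Theorem fact3p4 (gT : finGroupType) (G H : {group gT})
  (dim : Iirr G -> nat) (rho : forall l : Iirr G, mx_representation algC G (dim l))
  (D : nat) (R : mx_representation algC G D) (psi : 'cV[algC]_D) (T : {set gT}) :
  (forall l, unitary_rep (rho l)) ->
  (forall l, cfRepr (rho l) = 'chi_l) ->
  unitary_rep R ->
  H \subset G ->
  (forall h, h \in H -> R h *m psi = psi) ->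
  is_transversal T (lcosets H G) G ->
  forall l : Iirr G,
    StateHSP_prob rho R psi l =
    (dim l)%:R / #|G|%:R *
      \sum_(c in T) \sum_(h in H) \tr (rho l (c * h)%g) * braket psi (R c *m psi).
Proof.
move=> Urho Hc UR sHG Hpsi tr l.
have [d1 r1] := @triv_rep _ _ _ _ Hc.
have step1 g : g \in G -> IQFT rho (@init_state _ _ dim _ psi) g = fcoef dim 0 *: psi.
  move=> Gg; rewrite /IQFT (bigD1 0) //= [X in _ + X]big1 ?addr0; last first.
    move=> l' nl. apply: big1 => i _; apply: big1 => j _.
    by rewrite /init_state (negbTE nl) /= scaler0.
  rewrite (eq_bigr (fun _ => (fcoef dim 0 *: psi) *+ dim 0)).
    rewrite sumr_const card_ord; move: (fcoef dim 0 *: psi) => x; by rewrite d1.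
  move=> i _; rewrite (eq_bigr (fun _ => fcoef dim 0 *: psi)).
    rewrite sumr_const card_ord; move: (fcoef dim 0 *: psi) => x; by [].
  move=> j _; rewrite /init_state r1 // rmorph1 mulr1 eqxx /=.
  have z (k : 'I_(dim 0)) : val k == 0%N.
    by case: k => m /= hm; move: hm; rewrite d1 ltnS leqn0.
  by rewrite !z.
pose f x := \tr (rho l x) * braket psi (R x *m psi).
pose K := (fcoef dim l)^* * fcoef dim l * ((fcoef dim 0)^* * fcoef dim 0).
have step2 i j : QFT rho (ctrl_act R (IQFT rho (@init_state _ _ dim _ psi))) i j =
    \sum_(g in G) (fcoef dim l * rho l g i j * fcoef dim 0) *: (R g *m psi).
  by rewrite /QFT; apply: eq_bigr => g Gg; rewrite /ctrl_act step1 // -scalemxAr scalerA.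
rewrite /StateHSP_prob /prob_label.
under eq_bigr => i _ do under eq_bigr => j _ do rewrite step2 sqnormE braket_sum.
under eq_bigr => i _ do rewrite exchange_big.
under eq_bigr => i _ do under eq_bigr => g _ do rewrite exchange_big.
rewrite exchange_big.
under eq_bigr => g _ do rewrite exchange_big.
rewrite (eq_bigr (fun g => \sum_(g' in G) K * f (g^-1 * g')%g)); last first.
  move=> g Gg; apply: eq_bigr => g' Gg'.
  rewrite braket_R // /f (tr_adj _ _ _ _ _ _ (Urho l)) // mulrA mulr_sumr mulr_suml.
  apply: eq_bigr => i _; rewrite mulr_sumr mulr_suml; apply: eq_bigr => j _.
  rewrite /K !rmorphM /=; ring.
under eq_bigr => g Gg do rewrite -mulr_sumr (sum_transl _ G f _ Gg).
rewrite sumr_const (sum_transversal _ _ _ _ f sHG tr).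
have -> : \sum_(c in T) \sum_(h in H) f (c * h)%g =
  \sum_(c in T) \sum_(h in H) \tr (rho l (c * h)%g) * braket psi (R c *m psi).
  apply: eq_bigr => c Tc; apply: eq_bigr => h Hh.
  have Gc : c \in G by apply: (subsetP (transversal_sub tr)).
  have Gh : h \in G by apply: (subsetP sHG).
  by rewrite /f [R (c * h)%g](repr_mxM R) // -mulmxA Hpsi.
have HK : K = (dim l)%:R / #|G|%:R * (1 / #|G|%:R).
  rewrite /K /fcoef !sqrtC_conjK ?d1 //.
    by rewrite divr_ge0 ?ler0n.
  by rewrite divr_ge0 ?ler0n.
have G0 : #|G|%:R != 0 :> algC by rewrite pnatr_eq0 -lt0n cardG_gt0.
rewrite HK -mulr_natr; field.
by [].
Qed.
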